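(* The linear span $G^{00}$ of all operators $\bar\Xi^{\lambda_1}_{\lambda_1}\otimes f^{\dot I}_{\dot I}\otimes\Xi^{\lambda_2}_{\lambda_2}$, $\bar\Xi^{\lambda}_{\lambda}\otimes l^{\dot I}_{\dot I}$, $r^{\dot I}_{\dot I}\otimes\Xi^{\lambda}_{\lambda}$ and $\sigma^{\dot I}_{\dot I}$ ($\dot I$ any sequence, $\lambda,\lambda_1,\lambda_2\in\{1,\dots,\Lambda_F\}$) is a Cartan subalgebra of $\hat{G}_{\Lambda,\Lambda_F}$, i.e. a nilpotent subalgebra equal to its own normalizer in $\hat{G}_{\Lambda,\Lambda_F}$ (and these spanning operators are linearly dependent).
   Context: Fix positive integers $\Lambda,\Lambda_F$. A sequence $\dot I=i_1\cdots i_a$ is a finite, possibly empty, sequence of integers in $\{1,\dots,\Lambda\}$; juxtaposition denotes concatenation and $\delta^{\dot I}_{\dot J}$ is $1$ if $\dot I=\dot J$ and $0$ otherwise (similarly for integers). Let $\mathcal{T}_o$ be the complex vector space with basis the symbols $\bar\phi^{\lambda_1}\otimes s^{\dot K}\otimes\phi^{\lambda_2}$, $1\le\lambda_1,\lambda_2\le\Lambda_F$, $\dot K$ any sequence. For all sequences $\dot I,\dot J$ and all $\lambda_i\in\{1,\dots,\Lambda_F\}$ define linear operators on $\mathcal{T}_o$ (each written as a single symbol): first kind: $\bar\Xi^{\lambda_1}_{\lambda_2}\otimes f^{\dot I}_{\dot J}\otimes\Xi^{\lambda_3}_{\lambda_4}(\bar\phi^{\lambda_5}\otimes s^{\dot K}\otimes\phi^{\lambda_6})=\delta^{\lambda_5}_{\lambda_2}\delta^{\dot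 K}_{\dot J}\delta^{\lambda_6}_{\lambda_4}\,\bar\phi^{\lambda_1}\otimes s^{\dot I}\otimes\phi^{\lambda_3}$; second kind: $\bar\Xi^{\lambda_1}_{\lambda_2}\otimes l^{\dot I}_{\dot J}(\bar\phi^{\lambda_3}\otimes s^{\dot K}\otimes\phi^{\lambda_4})=\delta^{\lambda_3}_{\lambda_2}\sum_{\dot K_1\dot K_2=\dot K}\delta^{\dot K_1}_{\dot J}\,\bar\phi^{\lambda_1}\otimes s^{\dot I\dot K_2}\otimes\phi^{\lambda_4}$; third kind: $r^{\dot I}_{\dot J}\otimes\Xi^{\lambda_1}_{\lambda_2}(\bar\phi^{\lambda_3}\otimes s^{\dot K}\otimes\phi^{\lambda_4})=\delta^{\lambda_4}_{\lambda_2}\sum_{\dot K_1\dot K_2=\dot K}\delta^{\dot K_2}_{\dot J}\,\bar\phi^{\lambda_3}\otimes s^{\dot K_1\dot I}\otimes\phi^{\lambda_1}$; fourth kind: $\sigma^{\dot I}_{\dot J}(\bar\phi^{\lambda_1}\otimes s^{\dot K}\otimes\phi^{\lambda_2})=\sum_{\dot K_1\dot K_2\dot K_3=\dot K}\delta^{\dot K_2}_{\dot J}\,\bar\phi^{\lambda_1}\otimes s^{\dot K_1\dot I\dot K_3}\otimes\phi^{\lambda_2}$; sums run over all ways to write $\dot K$ as a concatenation of possibly empty sequences. The open string algebra $\hat{G}_{\Lambda,\Lambda_F}$ is the complex Lie algebra (commutator bracket) of operators on $\mathcal{T}_o$ spanned by all operators of these four kinds. *)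

(* Defs.v *)
From HB Require Import structures.
From mathcomp Require Import all_boot all_order all_algebra.
From mathcomp Require Import finmap.
From mathcomp Require Import monalg.
From mathcomp Require Import complex.
From mathcomp Require Import reals.

Set Implicit Arguments.
Unset Strict Implicit.
Unset Printing Implicit Defensive.

Import Order.TTheory GRing.Theory Num.Theory.
Local Open Scope ring_scope.

Section OpenString.

(* C is the field of scalars; L = Lambda, LF = Lambda_F.
   Letters {1..Lambda} are represented by 'I_L (shifted by one),
   flavour indices {1..Lambda_F} by 'I_LF. *)
Variables (C : fieldType) (L LF : nat).

(* basis symbol  phibar^{l1} (x) s^K (x) phi^{l2}  is  (l1, K, l2) *)
Definition basis := ('I_LF * seq 'I_L * 'I_LF)%type.

Definition To := {malg C[basis]}.

Definition bvec (b : basis) : To := << b >>.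

Definition extend (g : basis -> To) (v : To) : To :=
  \sum_(k <- msupp v) v@_k *: g k.

Definition splits2 (K : seq 'I_L) : seq (seq 'I_L * seq 'I_L) :=
  [seq (take n K, drop n K) | n <- iota 0 (size K).+1].

Definition splits3 (K : seq 'I_L) : seq (seq 'I_L * seq 'I_L * seq 'I_L) :=
  flatten [seq [seq (p.1, q.1, q.2) | q <- splits2 p.2] | p <- splits2 K].

(* labels of the four kinds of generators (a sum type, so that it is
   an eqType):
   inl (inl (l1, l2, I, J, l3, l4)) = Xibar^{l1}_{l2} (x) f^I_J (x) Xi^{l3}_{l4}
   inl (inr (l1, l2, I, J))         = Xibar^{l1}_{l2} (x) l^I_J
   inr (inl (I, J, l1, l2))         = r^I_J (x) Xi^{l1}_{l2}
   inr (inr (I, J))                 = sigma^I_J                              *)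
Definition gen : Type :=
  (('I_LF * 'I_LF * seq 'I_L * seq 'I_L * 'I_LF * 'I_LF)
   + ('I_LF * 'I_LF * seq 'I_L * seq 'I_L))
  + ((seq 'I_L * seq 'I_L * 'I_LF * 'I_LF) + (seq 'I_L * seq 'I_L)).

Definition gen_basis (g : gen) (b : basis) : To :=
  let: (m1, K, m2) := b in
  match g with
  | inl (inl (l1, l2, Is, Js, l3, l4)) =>
      ((m1 == l2) && (K == Js) && (m2 == l4))%:R *: bvec (l1, Is, l3)
  | inl (inr (l1, l2, Is, Js)) =>
      ((m1 == l2))%:R *:
        \sum_(p <- splits2 K) (p.1 == Js)%:R *: bvec (l1, Is ++ p.2, m2)
  | inr (inl (Is, Js, l1, l2)) =>
      ((m2 == l2))%:R *:
        \sum_(p <- splits2 K) (p.2 == Js)%:R *: bvec (m1, p.1 ++ Is, l1)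
  | inr (inr (Is, Js)) =>
      \sum_(p <- splits3 K) (p.1.2 == Js)%:R *: bvec (m1, p.1.1 ++ Is ++ p.2, m2)
  end.

Definition act (g : gen) : To -> To := extend (gen_basis g).

Definition is_diag (g : gen) : bool :=
  match g with
  | inl (inl (l1, l2, Is, Js, l3, l4)) => [&& l1 == l2, Is == Js & l3 == l4]
  | inl (inr (l1, l2, Is, Js)) => (l1 == l2) && (Is == Js)
  | inr (inl (Is, Js, l1, l2)) => (Is == Js) && (l1 == l2)
  | inr (inr (Is, Js)) => Is == Js
  end.

Definition comb (s : seq (C * gen)) (v : To) : To :=
  \sum_(x <- s) x.1 *: act x.2 v.

Definition inG (A : To -> To) : Prop :=
  exists s : seq (C * gen), forall v, A v = comb s v.

Definition inG00 (A : To -> To) : Prop :=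
  exists s : seq (C * gen), all is_diag (map snd s) /\ forall v, A v = comb s v.

Definition bracket (A B : To -> To) : To -> To := fun v => A (B v) - B (A v).

Fixpoint nested_bracket (n : nat) (x : nat -> To -> To) : To -> To :=
  match n with
  | 0 => x 0%N
  | k.+1 => bracket (x k.+1) (nested_bracket k x)
  end.

End OpenString.

(* Main.v *)
Require Import Defs.
From HB Require Import structures.
From mathcomp Require Import all_boot all_order all_algebra.
From mathcomp Require Import finmap monalg complex reals.
From mathcomp Require Import zify.
Import Order.TTheory GRing.Theory Num.Theory.
Local Open Scope ring_scope.

Set Implicit Arguments.
Unset Strict Implicit.

Section Aux.
Variables (C : fieldType) (L LF : nat).
Local Notation To := (To C L LF).
Local Notation basis := (basis L LF).
Local Notation gen := (gen L LF).
Local Notation bv := (@bvec C L LF).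

Definition lin (A : To -> To) := forall a v w, A (a *: v + w) = a *: A v + A w.

Lemma mcU c b k : (<< c *g b >> : To)@_k = c *+ (b == k).
Proof. exact: (@mcoeffU basis C b c k). Qed.
Lemma mcZ c (g : To) k : (c *: g)@_k = c * g@_k.
Proof. exact: (@mcoeffZ basis C c). Qed.
Lemma mcbv b k : (bv b)@_k = (b == k)%:R.
Proof. exact: (@mcoeffU basis C b 1 k). Qed.
Lemma mcD (g h : To) k : (g + h)@_k = g@_k + h@_k.
Proof. exact: (@mcoeffD basis C k). Qed.
Lemma mcB (g h : To) k : (g - h)@_k = g@_k - h@_k.
Proof. exact: (@mcoeffB basis C k). Qed.
Lemma mc0 k : (0 : To)@_k = 0.
Proof. exact: (@mcoeff0 basis C k). Qed.
Lemma mcsum (T : Type) (d : seq T) (F : T -> To) k :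
  (\sum_(x <- d) F x)@_k = \sum_(x <- d) (F x)@_k.
Proof. elim: d => [|x d IH]; first by rewrite !big_nil; exact: mc0.
by rewrite !big_cons [LHS]mcD IH. Qed.

Lemma bvecZ c (b : basis) : << c *g b >> = c *: bv b :> To.
Proof.
apply/malgP => k.
by rewrite [LHS]mcU [RHS]mcZ mcbv mulr_natr.
Qed.

Lemma extendEw (g : basis -> To) v (d : {fset basis}) : (msupp v `<=` d)%fset ->
  extend g v = \sum_(k <- d) v@_k *: g k.
Proof.
move=> le; rewrite /extend (big_fset_incl _ le) //= => x _ /mcoeff_outdom ->.
by rewrite scale0r.
Qed.

Lemma extend_lin g : lin (extend g).
Proof.
move=> a v w.
set D := (msupp v `|` msupp w `|` msupp (a *: v + w))%fset.
have h1 : (msupp v `<=` D)%fset.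
  by rewrite /D -fsetUA fsubsetUl.
have h2 : (msupp w `<=` D)%fset.
  by rewrite /D -fsetUA fsubsetU // fsubsetUl orbT.
have h3 : (msupp (a *: v + w) `<=` D)%fset.
  by rewrite /D fsubsetUr.
rewrite (extendEw _ h1) (extendEw _ h2) (extendEw _ h3) scaler_sumr -big_split /=.
apply: eq_bigr => k _; by rewrite (mcD (a *: v) w k) (mcZ a v k) scalerDl scalerA.
Qed.

Lemma extend_bvec g b : extend g (bv b) = g b.
Proof.
rewrite /extend /bvec (@msuppU basis C) oner_eq0 big_seq_fset1.
by rewrite (mcU 1 b b) eqxx scale1r.
Qed.

Lemma act_bvec g b : act g (bv b) = gen_basis C g b.
Proof. exact: extend_bvec. Qed.

Lemma comb_lin s : lin (comb s).
Proof.
move=> a v w; rewrite /comb scaler_sumr -big_split /=.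
apply: eq_bigr => x _; rewrite /act extend_lin scalerDr !scalerA.
by rewrite mulrC.
Qed.

Lemma lin0 A : lin A -> A 0 = 0.
Proof.
move=> h; have e := h 1 0 0; rewrite !scale1r addr0 in e.
by have := congr1 (fun x => x - A 0) e; rewrite /= subrr addrK => <-.
Qed.

Lemma linD A : lin A -> forall v w, A (v + w) = A v + A w.
Proof. by move=> h v w; rewrite -{1}[v]scale1r h scale1r. Qed.

Lemma linZ A : lin A -> forall a v, A (a *: v) = a *: A v.
Proof. by move=> h a v; rewrite -[a *: v]addr0 h lin0 // addr0. Qed.

Lemma lin_sum A (T : Type) (d : seq T) (F : T -> To) : lin A ->
  A (\sum_(k <- d) F k) = \sum_(k <- d) A (F k).
Proof.
move=> h; elim: d => [|x d IH]; first by rewrite !big_nil lin0.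
by rewrite !big_cons linD // IH.
Qed.

Lemma lin_decomp A v : lin A -> A v = \sum_(k <- msupp v) v@_k *: A (bv k).
Proof.
move=> h; rewrite {1}(monalgE v) lin_sum //.
by apply: eq_bigr => k _; rewrite bvecZ linZ.
Qed.

Lemma lin_ext A B : lin A -> lin B -> (forall b, A (bv b) = B (bv b)) ->
  forall v, A v = B v.
Proof.
move=> hA hB e v; rewrite (lin_decomp v hA) (lin_decomp v hB).
by apply: eq_bigr => k _; rewrite e.
Qed.

Lemma lin_comp A B : lin A -> lin B -> lin (fun v => A (B v)).
Proof. by move=> hA hB a v w; rewrite hB hA. Qed.

Definition diagop (A : To -> To) := forall b, exists c, A (bv b) = c *: bv b.

Lemma scC (a c : C) (v : To) : a *: (c *: v) = c *: (a *: v).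
Proof. by rewrite !scalerA (mulrC a c). Qed.

Lemma diag_commute A B : lin A -> lin B -> diagop A -> diagop B ->
  forall v, A (B v) = B (A v).
Proof.
move=> hA hB dA dB; apply: lin_ext; try exact: lin_comp.
move=> b; have [a ea] := dA b; have [c ec] := dB b.
rewrite ec (linZ hA) ea (linZ hB) ec; exact: scC.
Qed.


Lemma splits2_cat (K : seq 'I_L) (p : seq 'I_L * seq 'I_L) : p \in splits2 K -> p.1 ++ p.2 = K.
Proof. by case/mapP => n _ ->; rewrite cat_take_drop. Qed.

Lemma splits3_cat (K : seq 'I_L) (p : seq 'I_L * seq 'I_L * seq 'I_L) : p \in splits3 K -> p.1.1 ++ p.1.2 ++ p.2 = K.
Proof.
case/flatten_mapP => q /splits2_cat e1 /mapP [r /splits2_cat e2 ->] /=.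
by rewrite e2 e1.
Qed.

Lemma cancel_r (T : eqType) (s1 s2 s3 : seq T) : s1 ++ s3 == s2 ++ s3 -> s1 == s2.
Proof.
move=> e; have := congr1 size (eqP e); rewrite !size_cat => /addIn hs.
by move: e; rewrite eqseq_cat // => /andP[].
Qed.

Lemma cancel_l (T : eqType) (s1 s2 s3 : seq T) : s1 ++ s2 == s1 ++ s3 -> s2 == s3.
Proof. by rewrite eqseq_cat // => /andP[]. Qed.

Lemma sum_diag (T : eqType) (S : seq T) (P : T -> bool) (f : basis -> To) (h : T -> basis) b :
  (forall p, p \in S -> P p -> h p = b) ->
  exists c, \sum_(p <- S) (P p)%:R *: f (h p) = c *: f b.
Proof.
move=> H; exists (\sum_(p <- S) (P p)%:R); rewrite scaler_suml.
apply: eq_big_seq => p pS; case Pp: (P p); first by rewrite (H p pS Pp).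
by rewrite !scale0r.
Qed.

Lemma sum_off (T : eqType) (S : seq T) (P : T -> bool) (h : T -> basis) b :
  (forall p, p \in S -> P p -> h p != b) ->
  (\sum_(p <- S) (P p)%:R *: bv (h p))@_b = 0.
Proof.
move=> H; rewrite mcsum; apply: big1_seq => p /andP [_ pS].
rewrite mcZ mcbv; case Pp: (P p); last by rewrite mul0r.
by rewrite (negbTE (H p pS Pp)) mulr0.
Qed.

Lemma ex0 (x y : To) : exists c, false%:R *: x = c *: y.
Proof. by exists 0; rewrite [LHS]scale0r [RHS]scale0r. Qed.

Lemma gen_diag (g : gen) b : is_diag g -> exists c, gen_basis C g b = c *: bv b.
Proof.
move: b => [[m1 K] m2].
case: g => [[[[[[[l1 l2] I] J] l3] l4] | [[[l1 l2] I] J]] | [[[[I J] l1] l2] | [I J]]] /=.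
- move=> /and3P [/eqP <- /eqP <- /eqP <-].
  case: (m1 =P l1) => [->|_] /=; last exact: ex0.
  case: (K =P I) => [->|_] /=; last exact: ex0.
  case: (m2 =P l3) => [->|_] /=; last exact: ex0.
  by exists 1.
- move=> /andP [/eqP <- /eqP <-].
  case: (m1 =P l1) => [<-|_] /=; last exact: ex0.
  rewrite scale1r.
  apply: (@sum_diag _ (splits2 K) (fun p => p.1 == I) bv (fun p => (m1, I ++ p.2, m2))).
  by move=> p /splits2_cat <- /eqP ->.
- move=> /andP [/eqP <- /eqP <-].
  case: (m2 =P l1) => [<-|_] /=; last exact: ex0.
  rewrite scale1r.
  apply: (@sum_diag _ (splits2 K) (fun p => p.2 == I) bv (fun p => (m1, p.1 ++ I, m2))).
  by move=> p /splits2_cat <- /eqP ->.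
- move=> /eqP <-.
  apply: (@sum_diag _ (splits3 K) (fun p => p.1.2 == I) bv
            (fun p => (m1, p.1.1 ++ I ++ p.2, m2))).
  by move=> p /splits3_cat <- /eqP ->.
Qed.

Lemma gen_off (g : gen) b : ~~ is_diag g -> (gen_basis C g b)@_b = 0.
Proof.
move: b => [[m1 K] m2].
case: g => [[[[[[[l1 l2] I] J] l3] l4] | [[[l1 l2] I] J]] | [[[[I J] l1] l2] | [I J]]] /= hn.
- rewrite mcZ mcbv.
  case: (m1 =P l2) => [->|_] /=; last by rewrite mul0r.
  case: (K =P J) => [->|_] /=; last by rewrite mul0r.
  case: (m2 =P l4) => [->|_] /=; last by rewrite mul0r.
  case: eqP => [[e1 e2 e3]|_]; last by rewrite mulr0.
  by move: hn; rewrite e1 e2 e3 !eqxx.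
- rewrite mcZ.
  case: (m1 =P l2) => [->|_] /=; last by rewrite mul0r.
  rewrite mul1r.
  apply: (@sum_off _ (splits2 K) (fun p => p.1 == J) (fun p => (l1, I ++ p.2, m2))).
  move=> p /splits2_cat <- /eqP -> /=; apply: contra hn.
  by rewrite !xpair_eqE => /andP [/andP [-> /cancel_r ->] _].
- rewrite mcZ.
  case: (m2 =P l2) => [->|_] /=; last by rewrite mul0r.
  rewrite mul1r.
  apply: (@sum_off _ (splits2 K) (fun p => p.2 == J) (fun p => (m1, p.1 ++ I, l1))).
  move=> p /splits2_cat <- /eqP -> /=; apply: contra hn.
  by rewrite !xpair_eqE => /andP [/andP [_ /cancel_l ->] ->].
- apply: (@sum_off _ (splits3 K) (fun p => p.1.2 == J)
            (fun p => (m1, p.1.1 ++ I ++ p.2, m2))).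
  move=> p /splits3_cat <- /eqP -> /=; apply: contra hn.
  by rewrite !xpair_eqE => /andP [/andP [_ /cancel_l /cancel_r ->] _].
Qed.


Lemma comb_cons (x : C * gen) s v : comb (x :: s) v = x.1 *: act x.2 v + comb s v.
Proof. exact: big_cons. Qed.

Lemma comb_nil v : comb ([::] : seq (C * gen)) v = 0.
Proof. exact: big_nil. Qed.

Lemma comb_diagop (s : seq (C * gen)) : all (@is_diag L LF) (map snd s) -> diagop (comb s).
Proof.
elim: s => [|x s IH] /=.
  by move=> _ b; exists 0; rewrite comb_nil scale0r.
case/andP => dx ds b; have [c hc] := IH ds b; have [d hd] := gen_diag b dx.
exists (x.1 * d + c); rewrite comb_cons hc act_bvec hd scalerA.
by rewrite [RHS]scalerDl.
Qed.

Lemma comb_coef (s : seq (C * gen)) b :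
  (comb s (bv b))@_b = (comb [seq x <- s | is_diag x.2] (bv b))@_b.
Proof.
elim: s => [|x s IH] //=.
case dx: (is_diag x.2); rewrite !comb_cons mcD.
  by rewrite IH mcD.
by rewrite IH mcZ act_bvec gen_off ?dx // mulr0 add0r.
Qed.

Lemma inG00_lin (A : To -> To) : inG00 A -> lin A.
Proof. by case=> s [_ hs] a v w; rewrite !hs comb_lin. Qed.

Lemma inG00_diag (A : To -> To) : inG00 A -> diagop A.
Proof.
case=> s [ds hs] b; have [c hc] := comb_diagop ds b.
by exists c; rewrite hs.
Qed.

Lemma bracket00 (A B : To -> To) : inG00 A -> inG00 B -> forall v, bracket A B v = 0.
Proof.
move=> hA hB v; rewrite /bracket.
rewrite (diag_commute (inG00_lin hA) (inG00_lin hB) (inG00_diag hA) (inG00_diag hB)).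
exact: subrr.
Qed.

Lemma bracket00_in (A B : To -> To) : inG00 A -> inG00 B -> inG00 (bracket A B).
Proof.
move=> hA hB; exists [::]; split => // v.
by rewrite comb_nil bracket00.
Qed.


Definition fgen (b : basis) : gen := inl (inl (b.1.1, b.1.1, b.1.2, b.1.2, b.2, b.2)).

Lemma fgen_proj b (w : To) : act (fgen b) w = w@_b *: bv b.
Proof.
have l1 : lin (act (fgen b)) := extend_lin _.
have l2 : lin (fun w : To => w@_b *: bv b).
  by move=> a v u; rewrite (mcD (a *: v) u b) (mcZ a v b) scalerDl scalerA.
apply: (lin_ext l1 l2) => k; rewrite act_bvec mcbv.
clear l1 l2; move: k b => [[k1 kK] k2] [[b1 bK] b2] /=.
by rewrite !xpair_eqE.
Qed.

Lemma fgen_in b : inG00 (@act C L LF (fgen b)).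
Proof.
exists [:: (1, fgen b)]; split; first by rewrite /fgen /= !eqxx.
by move=> v; rewrite comb_cons comb_nil addr0 scale1r.
Qed.

Lemma filter_diag (s : seq (C * gen)) :
  all (@is_diag L LF) (map snd [seq x <- s | is_diag x.2]).
Proof.
by rewrite all_map; apply/allP => x; rewrite mem_filter => /andP [].
Qed.

Lemma normalizer (A : To -> To) : inG A ->
  (forall B, inG00 B -> inG00 (bracket A B)) -> inG00 A.
Proof.
case=> s hs hN.
have lA : lin A by move=> a v w; rewrite !hs comb_lin.
have dA : diagop A.
  move=> b; have [c hc] := inG00_diag (hN _ (fgen_in b)) b.
  exists (c + (A (bv b))@_b).
  move: hc; rewrite /bracket !fgen_proj mcbv eqxx scale1r => /eqP.
  by rewrite subr_eq => /eqP e; rewrite [LHS]e scalerDl.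
exists [seq x <- s | is_diag x.2]; split; first exact: filter_diag.
apply: (lin_ext lA (comb_lin _)) => b.
have [a ea] := dA b; have [c ec] := comb_diagop (filter_diag s) b.
have e : a = c.
  have e0 := comb_coef s b; rewrite -(hs (bv b)) ea ec in e0.
  have e1 : a * (bv b)@_b = c * (bv b)@_b by rewrite -(mcZ a) -(mcZ c).
  by move: e1; rewrite (mcbv b b) eqxx !mulr1.
rewrite ea. rewrite ec. rewrite e. reflexivity.
Qed.

Lemma spl_first (K : seq 'I_L) (f : seq 'I_L -> To) :
  \sum_(p <- splits2 K) (p.1 == [::])%:R *: f ([::] ++ p.2) = f K.
Proof.
rewrite /splits2 big_map big_cons take0 drop0 eqxx scale1r.
rewrite big1_seq ?addr0 // => n /andP [_]; rewrite mem_iota => hn.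
have : take n K != [::].
  case/andP: hn => h1 h2; rewrite -size_eq0 size_takel -?lt0n //.
by move/negbTE ->; rewrite scale0r.
Qed.

Lemma spl_last (K : seq 'I_L) (f : seq 'I_L -> To) :
  \sum_(p <- splits2 K) (p.2 == [::])%:R *: f (p.1 ++ [::]) = f K.
Proof.
rewrite /splits2 big_map -addn1 iotaD big_cat /= big_cons big_nil.
rewrite take_size drop_size eqxx scale1r cats0 addr0.
rewrite big1_seq ?add0r // => n /andP [_]; rewrite mem_iota => hn.
have : drop n K != [::].
  by case/andP: hn => h1 h2; rewrite -size_eq0 size_drop -lt0n subn_gt0.
by move/negbTE ->; rewrite scale0r.
Qed.

Lemma sum_flav (F : 'I_LF -> To) m : \sum_(l <- enum 'I_LF) (m == l)%:R *: F l = F m.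
Proof.
rewrite (bigD1_seq m) ?mem_enum ?enum_uniq //= eqxx scale1r.
rewrite big1_seq ?addr0 // => l /andP [hne _].
by rewrite eq_sym (negbTE hne) scale0r.
Qed.

Lemma comb_cat (s1 s2 : seq (C * gen)) v : comb (s1 ++ s2) v = comb s1 v + comb s2 v.
Proof. exact: big_cat. Qed.

Definition rel_seq : seq (C * gen) :=
  [seq ((1 : C), (inl (inr (l, l, [::], [::])) : gen)) | l <- enum 'I_LF] ++
  [seq ((-1 : C), (inr (inl ([::], [::], l, l)) : gen)) | l <- enum 'I_LF].

Lemma rel_zero v : comb rel_seq v = 0.
Proof.
have l0 : lin (fun _ : To => 0) by move=> a x y; rewrite scaler0 addr0.
apply: (lin_ext (comb_lin _) l0) => -[[m1 K] m2].
rewrite /rel_seq comb_cat.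
rewrite [X in X + _](_ : _ = \sum_(l <- enum 'I_LF) (m1 == l)%:R *: bv (l, K, m2)); last first.
  rewrite /comb big_map; apply: eq_bigr => l _.
  rewrite act_bvec. rewrite [gen_basis _ _ _]/=.
  rewrite scale1r. rewrite (spl_first K (fun q => bv (l, q, m2))). reflexivity.
rewrite [X in _ + X](_ : _ = \sum_(l <- enum 'I_LF) - ((m2 == l)%:R *: bv (m1, K, l))); last first.
  rewrite /comb big_map; apply: eq_bigr => l _.
  rewrite act_bvec. rewrite [gen_basis _ _ _]/=. rewrite scaleN1r.
  rewrite (spl_last K (fun q => bv (m1, q, l))). reflexivity.
rewrite (sum_flav (fun l => bv (l, K, m2)) m1) sumrN.
rewrite (sum_flav (fun l => bv (m1, K, l)) m2) subrr. reflexivity.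
Qed.

End Aux.

Lemma uniq_mapmap (T1 T2 T3 : eqType) (f : T1 -> T2) (g : T2 -> T3) s :
  injective (g \o f) -> uniq s -> uniq (map g (map f s)).
Proof. by move=> hi hs; rewrite -map_comp map_inj_uniq. Qed.

Unset Implicit Arguments.

Theorem proposition3 (R : realType) (L LF : nat) (HL : (0 < L)%N) (HLF : (0 < LF)%N) :
  (* G^{00} is a Lie subalgebra of hat G_{L,LF} *)
  (forall A, @inG00 R[i] L LF A -> @inG R[i] L LF A) /\
  (forall A B, @inG00 R[i] L LF A -> @inG00 R[i] L LF B ->
     @inG00 R[i] L LF (@bracket R[i] L LF A B)) /\
  (* G^{00} is nilpotent *)
  (exists n : nat, forall x : nat -> To R[i] L LF -> To R[i] L LF,
      (forall k, @inG00 R[i] L LF (x k)) ->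
      forall v, @nested_bracket R[i] L LF n x v = 0) /\
  (* G^{00} equals its normalizer in hat G_{L,LF} *)
  (forall A : To R[i] L LF -> To R[i] L LF,
      (@inG R[i] L LF A /\
       forall B, @inG00 R[i] L LF B -> @inG00 R[i] L LF (@bracket R[i] L LF A B))
      <-> @inG00 R[i] L LF A) /\
  (* the spanning operators of G^{00} are linearly dependent *)
  (exists s : seq (R[i] * gen L LF),
      [/\ uniq (map snd s), all (@is_diag L LF) (map snd s),
          has (fun x => x.1 != 0) s
        & forall v, @comb R[i] L LF s v = 0]).
Proof.
split; first by move=> A [s [_ hs]]; exists s.
split; first by move=> A B; exact: bracket00_in.
split.
  by exists 1%N => x hx v /=; apply: bracket00.
split.
  move=> A; split; first by case=> hA hN; exact: normalizer.
  move=> hA; split; first by case: hA => s [_ hs]; exists s.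
  by move=> B hB; exact: bracket00_in.
exists (rel_seq R[i] L LF); split.
- rewrite /rel_seq map_cat cat_uniq; apply/and3P; split.
  + by apply: uniq_mapmap; [move=> l1 l2 [] | exact: enum_uniq].
  + apply/hasPn => x /mapP [y /mapP [l _ ->] ->]; apply/negP.
    by move=> /mapP [z /mapP [l' _ ->]].
  + by apply: uniq_mapmap; [move=> l1 l2 [] | exact: enum_uniq].
- rewrite /rel_seq map_cat all_cat !all_map; apply/andP; split.
  + by apply/allP => l _ /=; rewrite !eqxx.
  + by apply/allP => l _ /=; rewrite !eqxx.
- apply/hasP; exists (1, inl (inr (Ordinal HLF, Ordinal HLF, [::], [::]))).
    by rewrite mem_cat; apply/orP; left; apply/mapP; exists (Ordinal HLF); rewrite ?mem_enum.
  by rewrite /= oner_eq0.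
- exact: rel_zero.
Qed.
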